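(* Let $D$ be a friendship digraph and let $u,v$ be two distinct vertices of $D$. If $(u,v)\notin A(D)$ or $(v,u)\notin A(D)$, then $d^+(u)=d^+(v)$.
   Context: All digraphs are finite and have neither loops nor parallel arcs (a pair of opposite arcs $(u,v)$ and $(v,u)$ is allowed). $A(D)$ is the arc set and $d^+(v)$ the outdegree of $v$. A friendship digraph is a nontrivial digraph (at least two vertices) in which any two distinct vertices have exactly one common out-neighbor. *)

(* Defs.v *)
From mathcomp Require Import all_boot.
Set Implicit Arguments. Unset Strict Implicit. Unset Printing Implicit Defensive.

(* Parallel arcs are impossible by construction
   (a relation); loops are excluded by irreflexivity. *)
Definition loopless (T : finType) (arc : rel T) : Prop := irreflexive arc.

Definition outN (T : finType) (arc : rel T) (v : T) : {set T} := [set w | arc v w].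
Definition outdeg (T : finType) (arc : rel T) (v : T) : nat := #|outN arc v|.

Definition friendship_digraph (T : finType) (arc : rel T) : Prop :=
  [/\ loopless arc, 2 <= #|T| &
      forall x y : T, x != y -> #|outN arc x :&: outN arc y| = 1].

(* Main.v *)
Require Import Defs.
From mathcomp Require Import all_boot.
Set Implicit Arguments. Unset Strict Implicit.

Lemma sum_eq_le (I : finType) (F G : I -> nat) :
  (forall i, F i <= G i) -> \sum_i F i = \sum_i G i -> forall i, F i = G i.
Proof.
move=> H Hs i.
have L := leqif_sum (P := predT) (fun i _ => leqif_eq (H i)).
move: (L.2); rewrite Hs eqxx => /esym /forallP /(_ i) /=.
by move/eqP.
Qed.

Lemma cE (T : finType) (P : pred T) : #|[set y | P y]| = \sum_y P y.
Proof.
rewrite -sum1_card big_mkcond; apply: eq_bigr => y _; rewrite inE.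
by case: (P y).
Qed.

Lemma cntC (T : finType) (P : pred T) : \sum_z ~~ P z = #|T| - \sum_z P z.
Proof.
have <- : \sum_z P z + \sum_z ~~ P z = #|T|.
  rewrite -big_split /= -sum1_card; apply: eq_big => // z _.
  by case: (P z).
by rewrite addKn.
Qed.

Definition indeg (T : finType) (arc : rel T) (z : T) := #|[set y | arc y z]|.

Lemma key (T : finType) (arc : rel T) (x z : T) :
  friendship_digraph arc -> ~~ arc x z -> indeg arc z <= outdeg arc x.
Proof.
case=> _ _ Hc nxz.
have ex: forall y, arc y z -> exists w, outN arc x :&: outN arc y = [set w].
  move=> y ayz; apply/cards1P; apply/eqP; apply: Hc.
  apply/eqP => exy; move: nxz; by rewrite exy ayz.
pose f y := odflt x [pick w in outN arc x :&: outN arc y].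
have fP: forall y, arc y z -> f y \in outN arc x :&: outN arc y.
  move=> y ayz; rewrite /f; case: pickP => [w //| Hn] /=.
  case: (ex y ayz) => w Hw; have := Hn w; by rewrite Hw set11.
rewrite /indeg -(card_in_imset (f := f)).
  apply: subset_leq_card; apply/subsetP => w /imsetP [y]; rewrite inE => ayz ->.
  by have := fP y ayz; rewrite inE => /andP[].
move=> y y'; rewrite !inE => ayz ay'z eqf.
apply/eqP; apply: contraT => neq.
have := Hc y y' neq.
have fy := fP y ayz; have fy' := fP y' ay'z.
rewrite -eqf in fy'.
move: fy fy'; rewrite /outN !inE => /andP[xw yw] /andP[_ y'w].
have sub: [set f y; z] \subset [set w | arc y w] :&: [set w | arc y' w].
  apply/subsetP => w; rewrite !inE => /orP[/eqP->|/eqP->]; apply/andP; split=> //.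
have nz : f y != z by apply/eqP => e; move: nxz; rewrite -e xw.
move/subset_leq_card: sub; rewrite cards2 nz => /[swap] ->.
by [].
Qed.

Lemma deg_eq (T : finType) (arc : rel T) :
  friendship_digraph arc -> forall x z, ~~ arc x z -> outdeg arc x = outdeg arc z.
Proof.
move=> H; have [Hl _ _] := H.
have Hind : forall x, indeg arc x <= outdeg arc x.
  by move=> x; apply: key => //; rewrite Hl.
have oE : forall x, outdeg arc x = \sum_y arc x y by move=> x; rewrite /outdeg /outN cE.
have iE : forall z, indeg arc z = \sum_y arc y z by move=> z; rewrite /indeg cE.
have Heq : forall x, indeg arc x = outdeg arc x.
  apply: sum_eq_le => //.
  rewrite (eq_bigr _ (fun x _ => oE x)) (eq_bigr _ (fun x _ => iE x)).
  by rewrite exchange_big.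
pose F x z := (~~ arc x z) * outdeg arc z.
pose G x z := (~~ arc x z) * outdeg arc x.
have FG : forall x z, F x z <= G x z.
  move=> x z; rewrite /F /G; case: (boolP (arc x z)) => //= nxz.
  by rewrite !mul1n -Heq; apply: key.
have S : forall x, \sum_z F x z = \sum_z G x z.
  apply: sum_eq_le => [x|]; first by apply: leq_sum => z _.
  rewrite exchange_big /F /G.
  rewrite (eq_bigr (fun z => (#|T| - outdeg arc z) * outdeg arc z)); last first.
    by move=> z _; rewrite -big_distrl /= cntC -iE Heq.
  apply: eq_bigr => x _.
  by rewrite -big_distrl /= cntC -oE.
move=> x z nxz.
have := sum_eq_le (FG x) (S x) z.
by rewrite /F /G nxz !mul1n.
Qed.

Theorem proposition2p7 (T : finType) (arc : rel T) (u v : T) :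
  friendship_digraph arc -> u != v ->
  (~~ arc u v \/ ~~ arc v u) ->
  outdeg arc u = outdeg arc v.
Proof.
move=> H _ [h|h]; first exact: deg_eq h.
by apply/esym; exact: deg_eq h.
Qed.
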